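(* Let $E$ be a disjoint combination of $E_1,\dots,E_n$ and fix $i$. If $M$ and $N$ are quasi-$E_i$ terms and $F_{E_i}(M)\to^*_{R_E}F_{E_i}(N)$, then $M\to^*_{R_E}N$.
   Context: Fix names, variables, and constructors $\mathsf{pub},\mathsf{sign},\mathsf{blind},\langle\cdot,\cdot\rangle,\{\cdot\}_\cdot$. $E_1,\dots,E_n$ are equational theories with pairwise disjoint signatures $\Sigma_{E_i}$ (disjoint from the constructors), each containing at most one associative-commutative (AC) binary symbol $\oplus_i$ and each AC-convergent; $E$ is their union, presented by the rewrite system $R_E$ (the union of the individual rewrite systems) which is terminating and confluent modulo AC of all $\oplus_i$; $\to_{R_E}$ is one rewrite step modulo AC (applicable also to terms containing variables), $\to^*_{R_E}$ its reflexive-transitive closure; $\approx_E$ is equality modulo $E$. Terms are built from names, variables, the constructors and symbols of $\Sigma_E=\bigcup_i\Sigma_{E_i}$; $M,N$ here are ground. A term is $E_i$-alien if its head symbol is not in $\Sigma_{E_i}$. A term $M$ is a quasi-$E_i$ term if every $E_i$-alien subterm of $M$ is in $E$-normal form. Fix a function $v_E$ assigning to each ground term a variable such that $v_E(M)=v_E(N)$ iff $M\approx_E N$. The $E_i$ abstraction function $F_{E_i}$ on ground terms: $F_{E_i}(u)=u$ if $u$ is a name; $F_{E_i}(g(u_1,\dots,u_k))=g(F_{E_i}(u_1),\dots,F_{E_i}(u_k))$ if $g\in\Sigma_{E_i}$; $F_{E_i}(u)=v_E(u)$ otherwise. *)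

(* Defs.v *)
From Stdlib Require Import List Relations Arith.
Import ListNotations.
Set Implicit Arguments.

Inductive ctor := CPub | CSign | CBlind | CPair | CEnc.
Definition carity (c : ctor) : nat := match c with CPub => 1 | _ => 2 end.

(* Terms over names (nat), variables (nat), the constructors, and the
   symbols of Sigma_E (an arbitrary type S). *)
Inductive term (S : Type) : Type :=
| TName : nat -> term S
| TVar : nat -> term S
| TCon : ctor -> list (term S) -> term S
| TApp : S -> list (term S) -> term S.
Arguments TName {S}. Arguments TVar {S}. Arguments TCon {S}. Arguments TApp {S}.

Inductive subterm {S : Type} : term S -> term S -> Prop :=
| sub_refl t : subterm t t
| sub_con u c l t : In t l -> subterm u t -> subterm u (TCon c l)
| sub_app u f l t : In t l -> subterm u t -> subterm u (TApp f l).

Fixpoint subst {S : Type} (sg : nat -> term S) (t : term S) : term S :=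
  match t with
  | TName a => TName a
  | TVar x => sg x
  | TCon c l => TCon c (map (subst sg) l)
  | TApp f l => TApp f (map (subst sg) l)
  end.

Inductive ctx {S : Type} (r : relation (term S)) : relation (term S) :=
| ctx_root s t : r s t -> ctx r s t
| ctx_con c l1 s t l2 : ctx r s t ->
    ctx r (TCon c (l1 ++ s :: l2)) (TCon c (l1 ++ t :: l2))
| ctx_app f l1 s t l2 : ctx r s t ->
    ctx r (TApp f (l1 ++ s :: l2)) (TApp f (l1 ++ t :: l2)).

Definition ac_ax {S : Type} (P : S -> Prop) : relation (term S) :=
  fun s t => exists f a b c, P f /\
    ((s = TApp f [a; TApp f [b; c]] /\ t = TApp f [TApp f [a; b]; c]) \/
     (s = TApp f [TApp f [a; b]; c] /\ t = TApp f [a; TApp f [b; c]]) \/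
     (s = TApp f [a; b] /\ t = TApp f [b; a])).

Definition ac_eq {S : Type} (P : S -> Prop) : relation (term S) :=
  clos_refl_trans _ (ctx (ac_ax P)).

Definition rule_inst {S : Type} (R : term S * term S -> Prop) : relation (term S) :=
  fun s t => exists l r sg, R (l, r) /\ s = subst sg l /\ t = subst sg r.

Definition step_mod {S : Type} (P : S -> Prop) (R : term S * term S -> Prop)
  : relation (term S) :=
  fun s t => exists s' t', ac_eq P s s' /\ ctx (rule_inst R) s' t' /\ ac_eq P t' t.

Definition rstar_mod {S : Type} (P : S -> Prop) (R : term S * term S -> Prop)
  : relation (term S) :=
  clos_refl_trans _ (fun s t => step_mod P R s t \/ ac_eq P s t).

Definition normal_mod {S : Type} (P : S -> Prop) (R : term S * term S -> Prop)
  (s : term S) : Prop := forall t, ~ step_mod P R s t.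

Definition wf {S : Type} (ar : S -> nat) (t : term S) : Prop :=
  forall u, subterm u t ->
    match u with
    | TCon c l => length l = carity c
    | TApp f l => length l = ar f
    | _ => True
    end.

Definition pure {S : Type} (th : S -> nat) (j : nat) (t : term S) : Prop :=
  forall u, subterm u t ->
    match u with
    | TVar _ => True
    | TApp f _ => th f = j
    | _ => False
    end.

Definition ground {S : Type} (t : term S) : Prop := forall x, ~ subterm (TVar x) t.

Definition rewrite_rule {S : Type} (ar th : S -> nat) (j : nat)
  (lr : term S * term S) : Prop :=
  let (l, r) := lr in
  wf ar l /\ wf ar r /\ pure th j l /\ pure th j r /\
  (forall x, l <> TVar x) /\
  (forall x, subterm (TVar x) r -> subterm (TVar x) l).

Definition convergent_mod {S : Type} (P : S -> Prop) (R : term S * term S -> Prop)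
  (D : term S -> Prop) : Prop :=
  (forall t, D t -> Acc (fun u v => step_mod P R v u) t) /\
  (forall t u v, D t -> rstar_mod P R t u -> rstar_mod P R t v ->
     exists w1 w2, rstar_mod P R u w1 /\ rstar_mod P R v w2 /\ ac_eq P w1 w2).

Definition RE {S : Type} (n : nat) (R : nat -> term S * term S -> Prop)
  : term S * term S -> Prop :=
  fun lr => exists j, j < n /\ R j lr.

(* E is a disjoint combination of E_0, ..., E_{n-1}:
   th f = index of the theory whose signature contains f (so signatures are
   pairwise disjoint, and disjoint from the constructors by construction);
   isac f = f is an AC symbol; R j = rewrite system of E_j. *)
Definition disjoint_combination {S : Type} (ar th : S -> nat) (isac : S -> Prop)
  (n : nat) (R : nat -> term S * term S -> Prop) : Prop :=
  (forall f, th f < n) /\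
  (forall f, isac f -> ar f = 2) /\
  (forall f g, isac f -> isac g -> th f = th g -> f = g) /\
  (forall j lr, R j lr -> j < n /\ rewrite_rule ar th j lr) /\
  (forall j, j < n ->
     convergent_mod (fun f => isac f /\ th f = j) (R j)
                    (fun t => wf ar t /\ pure th j t)) /\
  convergent_mod isac (RE n R) (wf ar).

Definition eqE {S : Type} (isac : S -> Prop) (n : nat)
  (R : nat -> term S * term S -> Prop) : relation (term S) :=
  clos_refl_sym_trans _
    (fun s t => ctx (rule_inst (RE n R)) s t \/ ctx (ac_ax isac) s t).

Definition valid_vE {S : Type} (ar : S -> nat) (isac : S -> Prop) (n : nat)
  (R : nat -> term S * term S -> Prop) (vE : term S -> nat) : Prop :=
  forall M N, ground M -> ground N -> wf ar M -> wf ar N ->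
    (vE M = vE N <-> eqE isac n R M N).

Fixpoint absF {S : Type} (th : S -> nat) (i : nat) (vE : term S -> nat)
  (t : term S) : term S :=
  match t with
  | TName a => TName a
  | TApp f l =>
      if Nat.eqb (th f) i then TApp f (map (absF th i vE) l) else TVar (vE t)
  | _ => TVar (vE t)
  end.

Definition alien {S : Type} (th : S -> nat) (i : nat) (u : term S) : Prop :=
  match u with TApp f _ => th f <> i | _ => True end.

Definition quasi {S : Type} (th : S -> nat) (isac : S -> Prop) (n : nat)
  (R : nat -> term S * term S -> Prop) (i : nat) (M : term S) : Prop :=
  forall u, subterm u M -> alien th i u -> normal_mod isac (RE n R) u.

(* Main.v *)
Require Import Defs.
From Stdlib Require Import List Relations Arith.
From Stdlib Require Import ClassicalEpsilon.
Import ListNotations.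

Definition term_ind' {S : Type} (P : term S -> Prop)
  (Hn : forall a, P (TName a)) (Hv : forall x, P (TVar x))
  (Hc : forall c l, Forall P l -> P (TCon c l))
  (Ha : forall f l, Forall P l -> P (TApp f l)) : forall t, P t :=
  fix F t := match t with
  | TName a => Hn a
  | TVar x => Hv x
  | TCon c l => Hc c l ((fix G l := match l as l0 return Forall P l0 with
        | nil => Forall_nil P
        | x :: l' => @Forall_cons _ P x l' (F x) (G l') end) l)
  | TApp f l => Ha f l ((fix G l := match l as l0 return Forall P l0 with
        | nil => Forall_nil P
        | x :: l' => @Forall_cons _ P x l' (F x) (G l') end) l)
  end.

Lemma map_Forall_eq {A B : Type} (f g : A -> B) l :
  Forall (fun x => f x = g x) l -> map f l = map g l.
Proof. induction 1; simpl; f_equal; auto. Qed.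

Lemma subterm_trans {S : Type} (a b c : term S) :
  subterm a b -> subterm b c -> subterm a c.
Proof. intros H1 H2; induction H2; [auto | econstructor; eauto | econstructor; eauto]. Qed.

Lemma ac_ax_sym {S : Type} (P : S -> Prop) s t : ac_ax P s t -> ac_ax P t s.
Proof.
  intros (f&a&b&c&Hf&H). exists f.
  destruct H as [[-> ->]|[[-> ->]|[-> ->]]].
  - exists a, b, c; split; auto.
  - exists a, b, c; split; auto.
  - exists b, a, c; split; auto.
Qed.

Lemma ctx_sym {S : Type} (r : relation (term S)) :
  (forall s t, r s t -> r t s) -> forall s t, ctx r s t -> ctx r t s.
Proof. intros Hr s t H; induction H; [apply ctx_root | apply ctx_con | apply ctx_app]; auto. Qed.

Lemma ac_eq_sym {S : Type} (P : S -> Prop) s t : ac_eq P s t -> ac_eq P t s.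
Proof.
  induction 1.
  - apply rt_step; apply ctx_sym; auto; apply ac_ax_sym.
  - apply rt_refl.
  - eapply rt_trans; eauto.
Qed.

Lemma ac_lift {S : Type} (P : S -> Prop) (C : term S -> term S)
  (HC : forall r s t, ctx r s t -> ctx r (C s) (C t)) s t :
  ac_eq P s t -> ac_eq P (C s) (C t).
Proof. induction 1; [apply rt_step; auto | apply rt_refl | eapply rt_trans; eauto]. Qed.

Lemma rstar_lift {S : Type} (P : S -> Prop) Rr (C : term S -> term S)
  (HC : forall r s t, ctx r s t -> ctx r (C s) (C t)) s t :
  rstar_mod P Rr s t -> rstar_mod P Rr (C s) (C t).
Proof.
  induction 1 as [s t [H|H]| |]; [| | apply rt_refl | eapply rt_trans; eauto].
  - apply rt_step; left. destruct H as (s'&t'&H1&H2&H3).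
    exists (C s'), (C t'); split; [|split]; auto; apply ac_lift; auto.
  - apply rt_step; right; apply ac_lift; auto.
Qed.

Lemma ac_rstar {S : Type} (P : S -> Prop) Rr (s t : term S) :
  ac_eq P s t -> rstar_mod P Rr s t.
Proof. intro; apply rt_step; right; auto. Qed.

Lemma subst_subst {S : Type} (sg tau : nat -> term S) t :
  subst tau (subst sg t) = subst (fun x => subst tau (sg x)) t.
Proof.
  induction t using term_ind'; simpl; auto; f_equal; rewrite map_map;
  apply map_Forall_eq; auto.
Qed.

Lemma ctx_subst {S : Type} (r : relation (term S)) (tau : nat -> term S) :
  (forall s t, r s t -> r (subst tau s) (subst tau t)) ->
  forall s t, ctx r s t -> ctx r (subst tau s) (subst tau t).
Proof.
  intros Hr s t H; induction H; simpl; rewrite ?map_app; simpl;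
    [apply ctx_root | apply ctx_con | apply ctx_app]; auto.
Qed.

Lemma ac_ax_subst {S : Type} (P : S -> Prop) tau s t :
  ac_ax P s t -> ac_ax P (subst tau s) (subst tau t).
Proof.
  intros (f&a&b&c&Hf&H). exists f, (subst tau a), (subst tau b), (subst tau c).
  split; auto. destruct H as [[-> ->]|[[-> ->]|[-> ->]]]; simpl; auto.
Qed.

Lemma ac_eq_subst {S : Type} (P : S -> Prop) tau s t :
  ac_eq P s t -> ac_eq P (subst tau s) (subst tau t).
Proof.
  induction 1; [apply rt_step | apply rt_refl | eapply rt_trans; eauto].
  apply ctx_subst; auto. apply ac_ax_subst.
Qed.

Lemma rstar_subst {S : Type} (P : S -> Prop) Rr tau (s t : term S) :
  rstar_mod P Rr s t -> rstar_mod P Rr (subst tau s) (subst tau t).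
Proof.
  induction 1 as [s t [H|H]| |]; [| | apply rt_refl | eapply rt_trans; eauto].
  - apply rt_step; left. destruct H as (s'&t'&H1&H2&H3).
    exists (subst tau s'), (subst tau t'); split; [|split];
      try apply ac_eq_subst; auto.
    apply ctx_subst; auto.
    intros a b (l&r&sg&HR&->&->). exists l, r, (fun x => subst tau (sg x)).
    rewrite !subst_subst; auto.
  - apply rt_step; right; apply ac_eq_subst; auto.
Qed.

Lemma normal_ac {S : Type} (P : S -> Prop) Rr (a b : term S) :
  normal_mod P Rr a -> ac_eq P a b -> normal_mod P Rr b.
Proof.
  intros Hn Hab t (s'&t'&H1&H2&H3). apply (Hn t). exists s', t'.
  split; [eapply rt_trans; eauto | auto].
Qed.

Lemma rstar_normal {S : Type} (P : S -> Prop) Rr (a b : term S) :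
  rstar_mod P Rr a b -> normal_mod P Rr a -> ac_eq P a b.
Proof.
  induction 1 as [s t [H|H]| |]; intros Hn.
  - exfalso; apply (Hn t H).
  - auto.
  - apply rt_refl.
  - assert (ac_eq P x y) by auto. eapply rt_trans; eauto.
    apply IHclos_refl_trans2. eapply normal_ac; eauto.
Qed.

Lemma wf_sub {S : Type} (ar : S -> nat) t u : wf ar t -> subterm u t -> wf ar u.
Proof. intros H Hu v Hv; apply H; eapply subterm_trans; eauto. Qed.

Lemma wf_con {S : Type} (ar : S -> nat) c l :
  length l = carity c -> (forall x, In x l -> wf ar x) -> wf ar (TCon c l).
Proof.
  intros Hl Hx u Hu. inversion Hu; subst; [exact Hl|].
  unfold wf in Hx; eapply Hx; eauto.
Qed.

Lemma wf_app {S : Type} (ar : S -> nat) f l :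
  length l = ar f -> (forall x, In x l -> wf ar x) -> wf ar (TApp f l).
Proof.
  intros Hl Hx u Hu. inversion Hu; subst; [exact Hl|].
  unfold wf in Hx; eapply Hx; eauto.
Qed.

Lemma wf_name {S : Type} (ar : S -> nat) a : wf ar (TName (S:=S) a).
Proof. intros u Hu; inversion Hu; simpl; auto. Qed.

Fixpoint W {S : Type} (ar : S -> nat) (t : term S) : term S :=
  match t with
  | TName a => TName a
  | TVar x => TVar x
  | TCon c l => if Nat.eqb (length l) (carity c) then TCon c (map (W ar) l) else TName 0
  | TApp f l => if Nat.eqb (length l) (ar f) then TApp f (map (W ar) l) else TName 0
  end.

Lemma wf_W {S : Type} (ar : S -> nat) t : wf ar (W ar t).
Proof.
  induction t using term_ind'; simpl.
  - apply wf_name.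
  - intros u Hu; inversion Hu; simpl; auto.
  - destruct (Nat.eqb_spec (length l) (carity c)); [|apply wf_name].
    apply wf_con; [rewrite length_map; auto|].
    intros x Hx; apply in_map_iff in Hx; destruct Hx as (y&<-&Hy).
    rewrite Forall_forall in H; auto.
  - destruct (Nat.eqb_spec (length l) (ar f)); [|apply wf_name].
    apply wf_app; [rewrite length_map; auto|].
    intros x Hx; apply in_map_iff in Hx; destruct Hx as (y&<-&Hy).
    rewrite Forall_forall in H; auto.
Qed.

Lemma W_wf {S : Type} (ar : S -> nat) t : wf ar t -> W ar t = t.
Proof.
  induction t using term_ind'; intros Hw; simpl; auto.
  - assert (Hl : length l = carity c) by exact (Hw _ (sub_refl _)).
    rewrite Hl, Nat.eqb_refl. f_equal. rewrite <- (map_id l) at 2.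
    apply map_Forall_eq. rewrite Forall_forall in *. intros x Hx.
    apply H; auto. eapply wf_sub; eauto. econstructor; eauto. constructor.
  - assert (Hl : length l = ar f) by exact (Hw _ (sub_refl _)).
    rewrite Hl, Nat.eqb_refl. f_equal. rewrite <- (map_id l) at 2.
    apply map_Forall_eq. rewrite Forall_forall in *. intros x Hx.
    apply H; auto. eapply wf_sub; eauto. econstructor; eauto. constructor.
Qed.

Lemma W_subst {S : Type} (ar : S -> nat) sg t :
  wf ar t -> W ar (subst sg t) = subst (fun x => W ar (sg x)) t.
Proof.
  induction t using term_ind'; intros Hw; simpl; auto.
  - assert (Hl : length l = carity c) by exact (Hw _ (sub_refl _)).
    rewrite length_map, Hl, Nat.eqb_refl. f_equal. rewrite map_map.
    apply map_Forall_eq. rewrite Forall_forall in *. intros x Hx.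
    apply H; auto. eapply wf_sub; eauto. econstructor; eauto. constructor.
  - assert (Hl : length l = ar f) by exact (Hw _ (sub_refl _)).
    rewrite length_map, Hl, Nat.eqb_refl. f_equal. rewrite map_map.
    apply map_Forall_eq. rewrite Forall_forall in *. intros x Hx.
    apply H; auto. eapply wf_sub; eauto. econstructor; eauto. constructor.
Qed.

Lemma W_rule {S : Type} (ar : S -> nat) (P : S -> Prop) Rr :
  (forall l r, Rr (l, r) -> wf ar l /\ wf ar r) ->
  forall s t, ctx (rule_inst Rr) s t -> rstar_mod P Rr (W ar s) (W ar t).
Proof.
  intros HR s t H; induction H.
  - destruct H as (l&r&sg&Hlr&->&->). destruct (HR _ _ Hlr) as [Hl Hr].
    rewrite !W_subst by auto. apply rt_step; left.
    exists (subst (fun x => W ar (sg x)) l), (subst (fun x => W ar (sg x)) r).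
    split; [apply rt_refl|split; [|apply rt_refl]].
    apply ctx_root. exists l, r, (fun x => W ar (sg x)); auto.
  - simpl. assert (E : length (l1 ++ t :: l2) = length (l1 ++ s :: l2))
      by (rewrite !length_app; reflexivity).
    rewrite E. destruct (_ =? _); [|apply rt_refl]. rewrite !map_app; simpl.
    apply (rstar_lift P Rr (fun x => TCon c (map (W ar) l1 ++ x :: map (W ar) l2)));
      auto. intros; apply ctx_con; auto.
  - simpl. assert (E : length (l1 ++ t :: l2) = length (l1 ++ s :: l2))
      by (rewrite !length_app; reflexivity).
    rewrite E. destruct (_ =? _); [|apply rt_refl]. rewrite !map_app; simpl.
    apply (rstar_lift P Rr (fun x => TApp f (map (W ar) l1 ++ x :: map (W ar) l2)));
      auto. intros; apply ctx_app; auto.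
Qed.

Lemma W_ac {S : Type} (ar : S -> nat) (P : S -> Prop) :
  (forall f, P f -> ar f = 2) ->
  forall s t, ctx (ac_ax P) s t -> ac_eq P (W ar s) (W ar t).
Proof.
  intros HA s t H; induction H.
  - destruct H as (f&a&b&c&Hf&H).
    destruct H as [[-> ->]|[[-> ->]|[-> ->]]]; simpl; rewrite (HA f Hf); simpl;
      apply rt_step; apply ctx_root; exists f, (W ar a), (W ar b), (W ar c); auto.
  - simpl. assert (E : length (l1 ++ t :: l2) = length (l1 ++ s :: l2))
      by (rewrite !length_app; reflexivity).
    rewrite E. destruct (_ =? _); [|apply rt_refl]. rewrite !map_app; simpl.
    apply (ac_lift P (fun x => TCon c (map (W ar) l1 ++ x :: map (W ar) l2)));
      auto. intros; apply ctx_con; auto.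
  - simpl. assert (E : length (l1 ++ t :: l2) = length (l1 ++ s :: l2))
      by (rewrite !length_app; reflexivity).
    rewrite E. destruct (_ =? _); [|apply rt_refl]. rewrite !map_app; simpl.
    apply (ac_lift P (fun x => TApp f (map (W ar) l1 ++ x :: map (W ar) l2)));
      auto. intros; apply ctx_app; auto.
Qed.

Lemma eqE_join {S : Type} (ar th : S -> nat) isac n R s t :
  disjoint_combination ar th isac n R -> eqE isac n R s t ->
  exists w, rstar_mod isac (RE n R) (W ar s) w /\ rstar_mod isac (RE n R) (W ar t) w.
Proof.
  intros (Hth&Hac2&Hacu&HR&Hconvj&Hconv) H.
  assert (HRw : forall l r, RE n R (l, r) -> wf ar l /\ wf ar r).
  { intros l r (j&Hj&Hlr). destruct (HR _ _ Hlr) as (_&H1&H2&_). auto. }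
  induction H as [s t [H|H]| | |].
  - exists (W ar t); split; [apply W_rule; auto | apply rt_refl].
  - exists (W ar t); split; [apply ac_rstar; apply W_ac; auto | apply rt_refl].
  - exists (W ar x); split; apply rt_refl.
  - destruct IHclos_refl_sym_trans as (w&H1&H2). exists w; auto.
  - destruct IHclos_refl_sym_trans1 as (w1&H1&H2).
    destruct IHclos_refl_sym_trans2 as (w2&H3&H4).
    destruct (proj2 Hconv (W ar y) w1 w2 (wf_W ar y) H2 H3) as (p&q&H5&H6&H7).
    exists q; split.
    + eapply rt_trans; [exact H1|]. eapply rt_trans; [exact H5|]. apply ac_rstar; auto.
    + eapply rt_trans; eauto.
Qed.

Lemma key {S : Type} (ar th : S -> nat) isac n R vE u u' :
  disjoint_combination ar th isac n R -> valid_vE ar isac n R vE ->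
  ground u -> ground u' -> wf ar u -> wf ar u' ->
  normal_mod isac (RE n R) u -> normal_mod isac (RE n R) u' ->
  vE u = vE u' -> ac_eq isac u u'.
Proof.
  intros Hd Hv g1 g2 w1 w2 n1 n2 He.
  apply Hv in He; auto.
  destruct (eqE_join _ _ _ _ _ _ _ Hd He) as (w&H1&H2).
  rewrite W_wf in H1, H2 by auto.
  apply rstar_normal in H1; auto. apply rstar_normal in H2; auto.
  eapply rt_trans; [exact H1|]. apply ac_eq_sym; auto.
Qed.

Definition sig_of {S : Type} (G : term S -> Prop) (vE : term S -> nat) (x : nat) : term S :=
  match excluded_middle_informative (exists u, G u /\ vE u = x) with
  | left H => proj1_sig (constructive_indefinite_description _ H)
  | right _ => TVar x
  end.

Lemma sig_of_spec {S : Type} (G : term S -> Prop) vE u :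
  G u -> G (sig_of G vE (vE u)) /\ vE (sig_of G vE (vE u)) = vE u.
Proof.
  intros Hu. unfold sig_of. destruct excluded_middle_informative as [H|H].
  - destruct constructive_indefinite_description as (v&Hv1&Hv2); simpl; auto.
  - exfalso; apply H; eauto.
Qed.

Lemma list_lift {S : Type} (P : S -> Prop) f (g : term S -> term S) l :
  (forall x, In x l -> ac_eq P (g x) x) -> ac_eq P (TApp f (map g l)) (TApp f l).
Proof.
  intros H.
  assert (forall pre, ac_eq P (TApp f (pre ++ map g l)) (TApp f (pre ++ l))) as K.
  { induction l as [|a l IH]; intros pre; simpl; [apply rt_refl|].
    eapply rt_trans.
    - apply (ac_lift P (fun x => TApp f (pre ++ x :: map g l))).
      + intros; apply ctx_app; auto.
      + apply H; left; auto.
    - replace (pre ++ a :: map g l) with ((pre ++ [a]) ++ map g l)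
        by (rewrite <- app_assoc; reflexivity).
      replace (pre ++ a :: l) with ((pre ++ [a]) ++ l)
        by (rewrite <- app_assoc; reflexivity).
      apply IH; intros; apply H; right; auto. }
  apply (K nil).
Qed.

Lemma absF_back {S : Type} (th : S -> nat) (isac : S -> Prop) i vE
  (sg : nat -> term S) (X : term S) :
  ground X ->
  (forall t, subterm t X -> alien th i t -> ac_eq isac (sg (vE t)) t) ->
  forall t, subterm t X -> ac_eq isac (subst sg (absF th i vE t)) t.
Proof.
  intros Hg Hs t. induction t using term_ind'; intros Ht.
  - apply rt_refl.
  - exfalso; apply (Hg x Ht).
  - simpl. apply Hs; simpl; auto.
  - simpl. destruct (Nat.eqb_spec (th f) i).
    + simpl. rewrite map_map. apply list_lift. intros x Hx.
      rewrite Forall_forall in H. apply H; auto.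
      eapply subterm_trans; [|exact Ht]. econstructor; eauto. constructor.
    + simpl. apply Hs; simpl; auto.
Qed.

Theorem proposition3 (S : Type) (ar th : S -> nat) (isac : S -> Prop) (n : nat)
  (R : nat -> term S * term S -> Prop) (vE : term S -> nat) (i : nat)
  (M N : term S) :
  disjoint_combination ar th isac n R ->
  valid_vE ar isac n R vE ->
  i < n ->
  ground M -> ground N -> wf ar M -> wf ar N ->
  quasi th isac n R i M -> quasi th isac n R i N ->
  rstar_mod isac (RE n R) (absF th i vE M) (absF th i vE N) ->
  rstar_mod isac (RE n R) M N.
Proof.
  intros Hdc Hv Hi gM gN wM wN qM qN Hr.
  set (G := fun u => (subterm u M \/ subterm u N) /\ alien th i u).
  assert (HG : forall u, G u -> ground u /\ wf ar u /\ normal_mod isac (RE n R) u).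
  { intros u [[Hu|Hu] Ha].
    - split; [intros x Hx; apply (gM x); eapply subterm_trans; eauto|].
      split; [exact (wf_sub ar M u wM Hu) | apply qM; auto].
    - split; [intros x Hx; apply (gN x); eapply subterm_trans; eauto|].
      split; [exact (wf_sub ar N u wN Hu) | apply qN; auto]. }
  assert (Hs : forall t, G t -> ac_eq isac (sig_of G vE (vE t)) t).
  { intros t Ht. destruct (sig_of_spec G vE t Ht) as [H1 H2].
    destruct (HG _ H1) as (a1&b1&c1). destruct (HG _ Ht) as (a2&b2&c2).
    eapply key; eauto. }
  eapply rt_trans.
  { apply ac_rstar. apply ac_eq_sym.
    apply (absF_back th isac i vE (sig_of G vE) M gM); [|constructor].
    intros; apply Hs; split; auto. }
  eapply rt_trans.
  { apply rstar_subst. exact Hr. }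
  apply ac_rstar.
  apply (absF_back th isac i vE (sig_of G vE) N gN); [|constructor].
  intros; apply Hs; split; auto.
Qed.
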